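(* Let $\alpha,\beta>0$, let $n\ge 1$ be an integer, and let $f\in\mathcal{H}_\alpha(M)$ and $V\in\mathcal{H}_\beta(M)$. For $0\le i\le n-1$ set $W_i=V(\tfrac{i}{n})+V(\tfrac{i+1}{n})$ and $\delta_i=f(\tfrac{i+1}{n})-f(\tfrac{i}{n})$, let $\bar W_n=\frac1n\sum_{i=0}^{n-1}W_i$, $\overline{\delta^2_n}=\frac1n\sum_{i=0}^{n-1}\delta_i^2$, and $$T=\frac1n\sum_{i=0}^{n-1}\left(W_i+\delta_i^2-\bar W_n-\overline{\delta^2_n}\right)^2 .$$ Then, with $\bar V=\int_0^1V(x)\,dx$ and $\mathbf 1$ the constant function equal to one on $[0,1]$, $$\|V-\bar V\mathbf 1\|_2^2\lesssim T+n^{-2(\beta\wedge 1)}+n^{-4(\alpha\wedge1)},$$ where the implicit constant does not depend on $n$, $f$ or $V$.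
   Context: For $\alpha,M>0$, the Hölder class $\mathcal{H}_\alpha(M)$ is the set of functions $g:[0,1]\to\mathbb{R}$ such that $|g^{(\lfloor\alpha\rfloor)}(x)-g^{(\lfloor\alpha\rfloor)}(y)|\le M|x-y|^{\alpha-\lfloor\alpha\rfloor}$ for all $x,y\in[0,1]$ and $\|g^{(k)}\|_\infty\le M$ for all $k\in\{0,\dots,\lfloor\alpha\rfloor\}$. $M$ is a fixed, sufficiently large constant. $a\lesssim b$ means $a\le Cb$ for a constant $C$ which may depend on $\alpha,\beta,M$ only. $\|\cdot\|_2$ is the $L^2([0,1])$ norm; $a\wedge b=\min\{a,b\}$. *)

(* Defs.v *)
From Stdlib Require Import Reals Lra.
From Coquelicot Require Import Coquelicot.
Open Scope R_scope.

Definition nfloor (a : R) : nat := Z.to_nat (Int_part a).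

(* Hoelder class H_a(M) on [0,1].  g is given on R; only its behaviour on
   [0,1] matters (derivatives of order < floor a exist at each point of [0,1],
   derivatives of order <= floor a are bounded by M on [0,1], and the
   floor(a)-th derivative is (a - floor a)-Hoelder with constant M on [0,1]). *)
Definition holder (a M : R) (g : R -> R) : Prop :=
  let m := nfloor a in
  (forall k x, (k < m)%nat -> 0 <= x <= 1 -> ex_derive (Derive_n g k) x) /\
  (forall k x, (k <= m)%nat -> 0 <= x <= 1 -> Rabs (Derive_n g k x) <= M) /\
  (forall x y, 0 <= x <= 1 -> 0 <= y <= 1 ->
     Rabs (Derive_n g m x - Derive_n g m y) <= M * Rpower (Rabs (x - y)) (a - INR m)).

Definition W_i (n : nat) (V : R -> R) (i : nat) : R :=
  V (INR i / INR n) + V (INR (S i) / INR n).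

Definition delta_i (n : nat) (f : R -> R) (i : nat) : R :=
  f (INR (S i) / INR n) - f (INR i / INR n).

Definition avg (n : nat) (u : nat -> R) : R :=
  / INR n * sum_f_R0 u (Nat.pred n).

Definition T_stat (n : nat) (f V : R -> R) : R :=
  let Wbar := avg n (W_i n V) in
  let d2bar := avg n (fun i => (delta_i n f i) ^ 2) in
  avg n (fun i => (W_i n V i + (delta_i n f i) ^ 2 - Wbar - d2bar) ^ 2).

(* Main.v *)
Require Import Defs.
From Stdlib Require Import Reals Lra Lia.
From Coquelicot Require Import Coquelicot.
Open Scope R_scope.

Lemma nfloor0 a : (0 < a < 1) -> (Defs.nfloor a = 0)%nat.
Proof.
  intros Ha. unfold Defs.nfloor. destruct (base_Int_part a) as [H1 H2].
  assert (Z1: (Int_part a < 1)%Z) by (apply lt_IZR; simpl; lra).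
  assert (Z2: (-1 < Int_part a)%Z) by (apply lt_IZR; simpl; lra).
  lia.
Qed.

Lemma nfloor1 a : 1 <= a -> (1 <= Defs.nfloor a)%nat.
Proof.
  intros Ha. unfold Defs.nfloor. destruct (base_Int_part a) as [H1 H2].
  assert (Z2: (0 < Int_part a)%Z) by (apply lt_IZR; simpl; lra).
  lia.
Qed.

Lemma holder_mod a M g : 0 < a -> 0 < M -> holder a M g ->
  forall t x y, 0 < t -> 0 <= x <= 1 -> 0 <= y <= 1 -> Rabs (x - y) <= t ->
  Rabs (g x - g y) <= M * Rpower t (Rmin a 1).
Proof.
  intros Ha HM H t x y Ht Hx Hy Hxy.
  unfold holder in H; cbv zeta in H. destruct H as [Hd [Hb Hh]].
  destruct (Rlt_le_dec a 1) as [Ha1|Ha1].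
  - rewrite (nfloor0 a) in Hh by lra. rewrite Rmin_left by lra.
    specialize (Hh x y Hx Hy). simpl in Hh. rewrite Rminus_0_r in Hh.
    destruct (Req_dec x y) as [->|Hne].
    + rewrite Rminus_diag, Rabs_R0. unfold Rpower.
      apply Rmult_le_pos; [lra| left; apply exp_pos].
    + eapply Rle_trans; [exact Hh|]. apply Rmult_le_compat_l; [lra|].
      apply Rle_Rpower_l; [lra|]. split; [|exact Hxy].
      apply Rabs_pos_lt. lra.
  - pose proof (nfloor1 a Ha1) as Hm. rewrite Rmin_right by lra. rewrite Rpower_1 by lra.
    assert (HD : forall z, 0 <= z <= 1 -> ex_derive g z).
    { intros z Hz. exact (Hd 0%nat z ltac:(lia) Hz). }
    assert (HB : forall z, 0 <= z <= 1 -> Rabs (Derive g z) <= M).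
    { intros z Hz. exact (Hb 1%nat z Hm Hz). }
    assert (Hin : forall z, Rmin x y <= z <= Rmax x y -> 0 <= z <= 1).
    { intros z Hz. unfold Rmin, Rmax in Hz. destruct (Rle_dec x y); lra. }
    destruct (MVT_gen g x y (Derive g)) as [c [Hc Heq]].
    + intros z Hz. apply Derive_correct. apply HD, Hin. lra.
    + intros z Hz. apply continuity_pt_filterlim. apply (@ex_derive_continuous R_AbsRing R_NormedModule). apply HD, Hin. lra.
    + assert (E : g x - g y = - (g y - g x)) by ring. rewrite E, Rabs_Ropp, Heq, Rabs_mult.
      rewrite <- Rabs_Ropp, Ropp_minus_distr in Hxy.
      apply Rmult_le_compat; try apply Rabs_pos. apply HB, Hin; exact Hc. exact Hxy.
Qed.
Definition cont (h : R -> R) := forall x, continuity_pt h x.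

Lemma cont_const c : cont (fun _ => c).
Proof. intros x. apply continuity_pt_const. intros u v; reflexivity. Qed.

Lemma cont_minus f g : cont f -> cont g -> cont (fun x => f x - g x).
Proof. intros Hf Hg x. exact (continuity_pt_minus f g x (Hf x) (Hg x)). Qed.

Lemma cont_mult f g : cont f -> cont g -> cont (fun x => f x * g x).
Proof. intros Hf Hg x. exact (continuity_pt_mult f g x (Hf x) (Hg x)). Qed.

Lemma cont_sq h c : cont h -> cont (fun x => (h x - c) ^ 2).
Proof.
  intros H x. apply (continuity_pt_ext (fun x => (h x - c) * (h x - c))).
  intros; ring. apply cont_mult; apply cont_minus; auto using cont_const.
Qed.

Lemma exR f a b : cont f -> ex_RInt f a b.
Proof.
  intros H. apply (@ex_RInt_continuous R_CompleteNormedModule). intros z _. apply continuity_pt_filterlim, H.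
Qed.

Lemma int_var h c : cont h ->
  RInt (fun x => (h x - RInt h 0 1) ^ 2) 0 1 <= RInt (fun x => (h x - c) ^ 2) 0 1.
Proof.
  intros Hh. set (m := RInt h 0 1).
  assert (E : RInt (fun x => (h x - c) ^ 2) 0 1 =
     RInt (fun x => (h x - m) ^ 2 + (m - c) * (2 * h x - (m + c))) 0 1).
  { apply RInt_ext. intros x _. change ((h x - c) ^ 2 = (h x - m) ^ 2 + (m - c) * (2 * h x - (m + c))). ring. }
  assert (C1 : cont (fun x => 2 * h x)) by (apply cont_mult; auto using cont_const).
  assert (C2 : cont (fun x => 2 * h x - (m + c))) by (apply cont_minus; auto using cont_const).
  assert (C3 : cont (fun x => (m - c) * (2 * h x - (m + c)))) by (apply cont_mult; auto using cont_const).
  assert (E2 : RInt (fun x => (h x - m) ^ 2 + (m - c) * (2 * h x - (m + c))) 0 1 =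
      RInt (fun x => (h x - m) ^ 2) 0 1 + RInt (fun x => (m - c) * (2 * h x - (m + c))) 0 1).
  { exact (RInt_plus _ _ 0 1 (exR _ 0 1 (cont_sq h m Hh)) (exR _ 0 1 C3)). }
  assert (E3 : RInt (fun x => (m - c) * (2 * h x - (m + c))) 0 1 =
     (m - c) * RInt (fun x => 2 * h x - (m + c)) 0 1).
  { exact (RInt_scal _ 0 1 (m - c) (exR _ 0 1 C2)). }
  assert (E4 : RInt (fun x => 2 * h x - (m + c)) 0 1 =
     RInt (fun x => 2 * h x) 0 1 - RInt (fun _ => m + c) 0 1).
  { exact (RInt_minus _ _ 0 1 (exR _ 0 1 C1) (exR _ 0 1 (cont_const _))). }
  assert (E5 : RInt (fun x => 2 * h x) 0 1 = 2 * m).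
  { exact (RInt_scal _ 0 1 2 (exR _ 0 1 Hh)). }
  assert (E6 : RInt (fun _ => m + c) 0 1 = (1 - 0) * (m + c)).
  { exact (RInt_const 0 1 (m + c)). }
  rewrite E, E2, E3, E4, E5, E6.
  assert (0 <= (m - c) ^ 2) by apply pow2_ge_0. nra.
Qed.

Lemma chasles_sum g n : cont g -> (1 <= n)%nat ->
  RInt g 0 1 = sum_f_R0 (fun i => RInt g (INR i / INR n) (INR (S i) / INR n)) (pred n).
Proof.
  intros Hg Hn.
  assert (HN : 0 < INR n) by (apply lt_0_INR; lia).
  assert (K : forall k, RInt g 0 (INR (S k) / INR n) =
     sum_f_R0 (fun i => RInt g (INR i / INR n) (INR (S i) / INR n)) k).
  { induction k as [|k IH].
    - simpl sum_f_R0. f_equal. simpl. unfold Rdiv; ring.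
    - change (sum_f_R0 ?F (S k)) with (sum_f_R0 F k + F (S k)). rewrite <- IH. symmetry.
      exact (RInt_Chasles g 0 (INR (S k) / INR n) (INR (S (S k)) / INR n) (exR _ _ _ Hg) (exR _ _ _ Hg)). }
  rewrite <- K. replace (S (pred n)) with n by lia. f_equal. field. lra.
Qed.

Lemma piece_bound g a b K : cont g -> a <= b ->
  (forall x, a < x < b -> g x <= K) -> RInt g a b <= (b - a) * K.
Proof.
  intros Hg Hab H.
  assert (E : RInt (fun _ => K) a b = (b - a) * K) by exact (RInt_const a b K).
  rewrite <- E. apply RInt_le; auto using exR, cont_const.
Qed.
Lemma avg_le n u v : (1 <= n)%nat -> (forall i, (i <= pred n)%nat -> u i <= v i) ->
  avg n u <= avg n v.
Proof.
  intros Hn H. unfold avg. apply Rmult_le_compat_l.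
  left; apply Rinv_0_lt_compat, lt_0_INR; lia. apply sum_Rle; auto.
Qed.

Lemma avg_plus_const n u k : (1 <= n)%nat -> avg n (fun i => u i + k) = avg n u + k.
Proof.
  intros Hn. unfold avg. rewrite plus_sum, sum_cte. replace (S (pred n)) with n by lia.
  field. apply not_0_INR; lia.
Qed.

Lemma avg_const n k : (1 <= n)%nat -> avg n (fun _ => k) = k.
Proof.
  intros Hn. unfold avg. rewrite sum_cte. replace (S (pred n)) with n by lia.
  field. apply not_0_INR; lia.
Qed.

Lemma avg_bounds n u lo hi : (1 <= n)%nat -> (forall i, (i <= pred n)%nat -> lo <= u i <= hi) ->
  lo <= avg n u <= hi.
Proof.
  intros Hn H. split.
  - rewrite <- (avg_const n lo Hn). apply avg_le; auto. intros; apply H; auto.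
  - rewrite <- (avg_const n hi Hn). apply avg_le; auto. intros; apply H; auto.
Qed.

Lemma Rpower_inv N b : 0 < N -> Rpower (/ N) b = Rpower N (- b).
Proof. intros HN. unfold Rpower. rewrite ln_Rinv by lra. f_equal; ring. Qed.

Lemma Rpower_sq N b : Rpower N (- b) ^ 2 = Rpower N (- (2 * b)).
Proof. unfold Rpower. simpl. rewrite Rmult_1_r, <- exp_plus. f_equal; ring. Qed.

Lemma Rpower_4 N b : Rpower N (- b) ^ 4 = Rpower N (- (4 * b)).
Proof. unfold Rpower. simpl. rewrite Rmult_1_r, <- !exp_plus. f_equal; ring. Qed.

Lemma Rpower_inv_pow u b : 0 < u -> 0 < b -> Rpower (Rpower u (/ b)) b = u.
Proof.
  intros Hu Hb. rewrite Rpower_mult. rewrite Rinv_l by lra. apply Rpower_1; auto.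
Qed.

Definition clamp (x : R) := Rmax 0 (Rmin 1 x).

Lemma clamp_in x : 0 <= clamp x <= 1.
Proof. unfold clamp, Rmax, Rmin. repeat destruct Rle_dec; lra. Qed.

Lemma clamp_id x : 0 <= x <= 1 -> clamp x = x.
Proof. intros H. unfold clamp, Rmax, Rmin. repeat destruct Rle_dec; lra. Qed.

Lemma clamp_lip x y : Rabs (clamp x - clamp y) <= Rabs (x - y).
Proof.
  unfold clamp, Rmax, Rmin, Rabs. repeat destruct Rle_dec; repeat destruct Rcase_abs; lra.
Qed.

Lemma holder_uc a M g : 0 < a -> 0 < M -> holder a M g -> forall eps, 0 < eps ->
  exists d, 0 < d /\ forall x y, 0 <= x <= 1 -> 0 <= y <= 1 -> Rabs (x - y) < d ->
  Rabs (g x - g y) < eps.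
Proof.
  intros Ha HM H eps He.
  assert (Ha' : 0 < Rmin a 1) by (apply Rmin_glb_lt; lra).
  exists (Rpower (eps / (2 * M)) (/ Rmin a 1)). split.
  - unfold Rpower; apply exp_pos.
  - intros x y Hx Hy Hxy.
    eapply Rle_lt_trans.
    + apply (holder_mod a M g Ha HM H (Rpower (eps / (2 * M)) (/ Rmin a 1)) x y); auto. unfold Rpower; apply exp_pos. lra.
    + rewrite Rpower_inv_pow; auto. 2: apply Rdiv_lt_0_compat; lra.
      field_simplify; lra.
Qed.

Lemma cont_clamp a M g : 0 < a -> 0 < M -> holder a M g -> cont (fun x => g (clamp x)).
Proof.
  intros Ha HM H x. unfold continuity_pt, continue_in, limit1_in, limit_in.
  intros eps He. destruct (holder_uc a M g Ha HM H eps He) as [d [Hd Hu]].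
  exists d; split; auto. intros y [_ Hy]. simpl in *. unfold R_dist in *.
  apply Hu; auto using clamp_in. eapply Rle_lt_trans; [apply clamp_lip| exact Hy].
Qed.

Lemma grid n i : (1 <= n)%nat -> (i <= pred n)%nat ->
  0 <= INR i / INR n /\ INR (S i) / INR n <= 1 /\
  INR (S i) / INR n - INR i / INR n = / INR n.
Proof.
  intros Hn Hi. assert (HN : 0 < INR n) by (apply lt_0_INR; lia).
  assert (H1 : INR (S i) <= INR n) by (apply le_INR; lia).
  pose proof (pos_INR i).
  split; [|split].
  - unfold Rdiv. apply Rmult_le_pos; auto. left; apply Rinv_0_lt_compat; auto.
  - replace 1 with (INR n / INR n) by (field; lra). unfold Rdiv.
    apply Rmult_le_compat_r; auto. left; apply Rinv_0_lt_compat; auto.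
  - rewrite S_INR. field. lra.
Qed.

Theorem proposition2p1 (alpha beta M : R) :
  0 < alpha -> 0 < beta -> 0 < M ->
  exists C : R, 0 < C /\
    forall (n : nat) (f V : R -> R),
      (1 <= n)%nat -> holder alpha M f -> holder beta M V ->
      RInt (fun x => (V x - RInt V 0 1) ^ 2) 0 1
        <= C * (T_stat n f V
                + Rpower (INR n) (- (2 * Rmin beta 1))
                + Rpower (INR n) (- (4 * Rmin alpha 1))).
Proof.
  intros Ha Hb HM.
  assert (HM2 : 0 <= M ^ 2) by apply pow2_ge_0.
  assert (HM4 : 0 <= M ^ 4) by (replace (M ^ 4) with ((M ^ 2) ^ 2) by ring; apply pow2_ge_0).
  exists (1 + 2 * M ^ 2 + M ^ 4). split; [lra|].
  intros n f V Hn Hf HV.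
  assert (HN : 0 < INR n) by (apply lt_0_INR; lia).
  set (N := INR n) in *.
  set (eV := M * Rpower N (- Rmin beta 1)).
  set (eF := M * Rpower N (- Rmin alpha 1)).
  assert (HmodV : forall x y, 0 <= x <= 1 -> 0 <= y <= 1 -> Rabs (x - y) <= / N ->
     Rabs (V x - V y) <= eV).
  { intros x y Hx Hy Hxy. unfold eV. rewrite <- Rpower_inv by lra.
    apply (holder_mod beta M V Hb HM HV); auto. apply Rinv_0_lt_compat; auto. }
  assert (HmodF : forall x y, 0 <= x <= 1 -> 0 <= y <= 1 -> Rabs (x - y) <= / N ->
     Rabs (f x - f y) <= eF).
  { intros x y Hx Hy Hxy. unfold eF. rewrite <- Rpower_inv by lra.
    apply (holder_mod alpha M f Ha HM Hf); auto. apply Rinv_0_lt_compat; auto. }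
  assert (HdF : forall i, (i <= pred n)%nat -> 0 <= delta_i n f i ^ 2 <= eF ^ 2).
  { intros i Hi. destruct (grid n i Hn Hi) as [G1 [G2 G3]]. fold N in G1, G2, G3.
    pose proof (Rinv_0_lt_compat _ HN).
    assert (Hb1 := HmodF (INR (S i) / N) (INR i / N) ltac:(lra) ltac:(lra)
                   ltac:(apply Rabs_le; lra)).
    apply Rabs_le_between in Hb1. unfold delta_i. fold N. split; [apply pow2_ge_0|]. nra. }
  set (Wb := avg n (W_i n V)).
  set (db := avg n (fun i => delta_i n f i ^ 2)).
  set (c := Wb / 2).
  set (Vc := fun x => V (clamp x)).
  assert (HVc : cont Vc) by exact (cont_clamp beta M V Hb HM HV).
  assert (Hm01 : forall x, Rmin 0 1 < x < Rmax 0 1 -> 0 <= x <= 1).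
  { intros x Hx. unfold Rmin, Rmax in Hx. destruct Rle_dec; lra. }
  assert (S1 : RInt V 0 1 = RInt Vc 0 1).
  { apply RInt_ext. intros x Hx. change (V x = V (clamp x)). rewrite clamp_id; auto. }
  assert (S2 : RInt (fun x => (V x - RInt V 0 1) ^ 2) 0 1 = RInt (fun x => (Vc x - RInt Vc 0 1) ^ 2) 0 1).
  { rewrite S1. apply RInt_ext. intros x Hx.
    change ((V x - RInt Vc 0 1) ^ 2 = (V (clamp x) - RInt Vc 0 1) ^ 2). rewrite clamp_id; auto. }
  set (K := fun i => 2 * (W_i n V i / 2 - c) ^ 2 + 2 * eV ^ 2).
  assert (S5 : RInt (fun x => (Vc x - c) ^ 2) 0 1 <= sum_f_R0 (fun i => K i * / N) (pred n)).
  { rewrite (chasles_sum _ n (cont_sq Vc c HVc) Hn). apply sum_Rle. intros i Hi.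
    destruct (grid n i Hn Hi) as [G1 [G2 G3]]. fold N in G1, G2, G3.
    pose proof (Rinv_0_lt_compat _ HN).
    rewrite Rmult_comm, <- G3. apply piece_bound. apply cont_sq; auto. lra.
    intros x Hx. unfold Vc. rewrite clamp_id by lra.
    assert (B1 := HmodV x (INR i / N) ltac:(lra) ltac:(lra) ltac:(apply Rabs_le; lra)).
    assert (B2 := HmodV x (INR (S i) / N) ltac:(lra) ltac:(lra) ltac:(apply Rabs_le; lra)).
    apply Rabs_le_between in B1. apply Rabs_le_between in B2.
    unfold K, W_i. fold N.
    set (p := V (INR i / N)) in *. set (q := V (INR (S i) / N)) in *. set (u := V x) in *.
    assert (0 <= ((p + q) / 2 - c - (u - (p + q) / 2)) ^ 2) by apply pow2_ge_0.
    assert (0 <= (eV - (u - (p + q) / 2)) * (eV + (u - (p + q) / 2))) by (apply Rmult_le_pos; lra).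
    nra. }
  assert (S6 : sum_f_R0 (fun i => K i * / N) (pred n) = avg n K).
  { unfold avg. rewrite <- scal_sum. reflexivity. }
  assert (Hdb : 0 <= db <= eF ^ 2) by (apply avg_bounds; auto).
  assert (S7 : avg n K <= avg n (fun i => (W_i n V i + delta_i n f i ^ 2 - Wb - db) ^ 2
                                     + (eF ^ 4 + 2 * eV ^ 2))).
  { apply avg_le; auto. intros i Hi. unfold K, c. destruct (HdF i Hi) as [D1 D2].
    set (w := W_i n V i) in *. set (d := delta_i n f i ^ 2) in *.
    assert (0 <= (w + d - Wb - db + (d - db)) ^ 2) by apply pow2_ge_0.
    assert (0 <= (eF ^ 2 - (d - db)) * (eF ^ 2 + (d - db))) by (apply Rmult_le_pos; lra).
    nra. }
  rewrite avg_plus_const in S7 by auto.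
  assert (ET : T_stat n f V = avg n (fun i => (W_i n V i + delta_i n f i ^ 2 - Wb - db) ^ 2))
    by reflexivity.
  assert (HT : 0 <= T_stat n f V).
  { rewrite ET. rewrite <- (avg_const n 0 Hn). apply avg_le; auto. intros; apply pow2_ge_0. }
  assert (E4 : eF ^ 4 = M ^ 4 * Rpower N (- (4 * Rmin alpha 1))).
  { unfold eF. rewrite <- Rpower_4. ring. }
  assert (E2 : eV ^ 2 = M ^ 2 * Rpower N (- (2 * Rmin beta 1))).
  { unfold eV. rewrite <- Rpower_sq. ring. }
  assert (PA : 0 < Rpower N (- (2 * Rmin beta 1))) by (unfold Rpower; apply exp_pos).
  assert (PB : 0 < Rpower N (- (4 * Rmin alpha 1))) by (unfold Rpower; apply exp_pos).
  rewrite S2. eapply Rle_trans; [apply (int_var Vc c HVc)|].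
  eapply Rle_trans; [exact S5|]. rewrite S6. eapply Rle_trans; [exact S7|].
  rewrite <- ET, E4, E2. fold N.
  assert (0 <= M ^ 2 * T_stat n f V) by (apply Rmult_le_pos; lra).
  assert (0 <= M ^ 4 * T_stat n f V) by (apply Rmult_le_pos; lra).
  assert (0 <= M ^ 4 * Rpower N (- (2 * Rmin beta 1))) by (apply Rmult_le_pos; lra).
  assert (0 <= M ^ 2 * Rpower N (- (4 * Rmin alpha 1))) by (apply Rmult_le_pos; lra).
  nra.
Qed.
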